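(* Let $g:\mathbb{R}\to[0,1]$ be measurable, even ($g(-x)=g(x)$) and $\pi$-periodic ($g(x+\pi)=g(x)$). For positive integers $m,n$ let $\mu=\pi/n$ and $$\tilde{G}(m,n)=\frac{1}{\pi}\int_{-\pi/2}^{\pi/2}\prod_{i=0}^{n-1} g(x+mi\mu)\,dx.$$ Then for all positive integers $m,n$, $\tilde{G}(m,n)\ge \tilde{G}(1,n)$.
   Context: $g(x)$ is the probability of not detecting a target (with rectangular symmetry) observed at angle $x$; $\tilde G(m,n)$ is the average probability of no detection over a uniformly distributed target orientation when $n$ independent observations are made at angles separated consecutively by $m\pi/n$. *)

(* Defs.v *)
From HB Require Import structures.
From mathcomp Require Import all_boot all_order all_algebra.
From mathcomp Require Import all_classical all_reals all_analysis.
Set Implicit Arguments. Unset Strict Implicit. Unset Printing Implicit Defensive.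
Import Order.TTheory GRing.Theory Num.Theory.
Local Open Scope classical_set_scope.
Local Open Scope ring_scope.

Definition Gtilde (R : realType) (g : R -> R) (m n : nat) : \bar R :=
  let D : set R := `[- (pi / 2), pi / 2]%classic in
  let f : R -> R := fun x => \prod_(i < n) g (x + (m * i)%:R * (pi / n%:R)) in
  ((pi^-1)%:E * \int[@lebesgue_measure R]_(x in D) (f x)%:E)%E.

(* Main.v *)
Require Import Defs.
From HB Require Import structures.
From mathcomp Require Import all_boot all_order all_algebra.
From mathcomp Require Import all_classical all_reals all_analysis.
From mathcomp Require Import ring lra.
From mathcomp Require Import measurable_realfun.
Import Order.TTheory GRing.Theory Num.Theory.
Local Open Scope classical_set_scope.
Local Open Scope ring_scope.

Section Shift.
Context (R : realType) (c : R).
Local Open Scope ereal_scope.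
Local Notation mu := lebesgue_measure.

Lemma lebesgue_measure_shift (A : set R) : measurable A ->
  pushforward mu ((fun x => x + c)%R : _ -> measurableTypeR R) A = mu A.
Proof.
move=> mA.
have mphi : measurable_fun [set: measurableTypeR R] ((fun x => x + c)%R : _ -> measurableTypeR R).
  exact: (measurable_realfun.measurable_funD (@measurable_id _ _ _) (measurable_cst _)).
apply/esym/(@lebesgue_measure_unique R (measure_function_pushforward__canonical__measure_function_Measure mu mphi)) => //= _ [[a b]] _ <-.
rewrite /pushforward.
have -> : (fun x => x + c)%R @^-1` `]a, b] = `](a - c)%R, (b - c)%R]%classic.
  apply/seteqP; split => x /=; rewrite !in_itv /= ?ltrBlDr ?lerBrDr //.
rewrite !lebesgue_measure_itv /= !lte_fin ltrD2r.
case: ifP => // _; congr (_%:E); rewrite opprB; lra.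
Qed.

Lemma integral_shift (B : set R) (mB : measurable B) (h : R -> \bar R)
  (mh : measurable_fun setT h) (h0 : forall x, 0 <= h x) :
  \int[mu]_(x in (fun x => x + c)%R @^-1` B) h (x + c)%R =
  \int[mu]_(x in B) h x.
Proof.
have mphi : measurable_fun [set: measurableTypeR R] ((fun x => x + c)%R : _ -> measurableTypeR R).
  exact: (measurable_realfun.measurable_funD (@measurable_id _ _ _) (measurable_cst _)).
rewrite -[LHS](@ge0_integral_pushforward _ _ _ _ _ _ mphi) //=; last first.
  exact: measurable_funS mh.
by apply: eq_measure_integral => //= A mA AS; exact/lebesgue_measure_shift.
Qed.
End Shift.

Section Periodic.
Context (R : realType).
Local Open Scope ereal_scope.
Local Notation mu := (@lebesgue_measure R).

Lemma itv_oo_shift (a b c : R) :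
  (fun x => x + c)%R @^-1` `](a + c)%R, (b + c)%R[ = `]a, b[%classic.
Proof.
apply/seteqP; split => x /=; rewrite !in_itv /= => /andP[h1 h2];
  apply/andP; split; lra.
Qed.

Lemma integral_periodic (p : R) (h : R -> \bar R) (mh : measurable_fun setT h)
  (h0 : forall x, 0 <= h x) (hp : forall x, h (x + p)%R = h x)
  (a c : R) (c0 : (0 <= c)%R) (cp : (c < p)%R) :
  \int[mu]_(x in `]a, (a + p)%R[) h (x + c)%R = \int[mu]_(x in `]a, (a + p)%R[) h x.
Proof.
have [->|cpos] := eqVneq c 0%R.
  by apply: eq_integral => x _; rewrite addr0.
have {cpos c0} c0 : (0 < c)%R by rewrite lt_def cpos c0.
have mI (u v : R) : measurable_fun `]u, v[ h by exact: measurable_funS mh.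
rewrite -[in LHS](itv_oo_shift a (a + p) c) (@integral_shift R c _ (measurable_itv _) h mh h0).
have E1 : `](a + c)%R, (a + p + c)%R[%classic =
   `](a + c)%R, (a + p)%R[ `|` `[(a + p)%R, (a + p + c)%R[.
  apply: itv_bndbnd_setU; rewrite bnd_simp; lra.
have E2 : `]a, (a + p)%R[%classic = `]a, (a + c)%R[ `|` `[(a + c)%R, (a + p)%R[.
  apply: itv_bndbnd_setU; rewrite bnd_simp; lra.
rewrite E1 E2 ge0_integral_setU //; last 2 first.
- exact: measurable_funS mh.
- apply/eqP/seteqP; split => // x /= []; rewrite !in_itv /= => /andP[? ?] /andP[? ?]; lra.
rewrite [in RHS]ge0_integral_setU //; last 2 first.
- exact: measurable_funS mh.
- apply/eqP/seteqP; split => // x /= []; rewrite !in_itv /= => /andP[? ?] /andP[? ?]; lra.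
rewrite !integral_itv_bndoo // addeC; congr (_ + _).
rewrite (addrAC a p c) -[LHS](@integral_shift R p _ (measurable_itv _) h mh h0).
rewrite itv_oo_shift; apply: eq_integral => x _; exact: hp.
Qed.
End Periodic.

Section NatL.
Local Open Scope nat_scope.
Lemma coprime_div_gcd {m n : nat} : 0 < gcdn m n ->
  coprime (m %/ gcdn m n) (n %/ gcdn m n).
Proof.
move=> d0; rewrite /coprime.
have := div.muln_gcdl (m %/ gcdn m n) (n %/ gcdn m n) (gcdn m n).
rewrite !divnK ?dvdn_gcdl ?dvdn_gcdr // => e.
by rewrite -(eqn_pmul2r d0) mul1n e.
Qed.

Lemma mod_inj (a k s t : nat) : coprime a k -> s < k -> t < k ->
  (a * s) %% k = (a * t) %% k -> s = t.
Proof.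
move=> co sk tk.
wlog st : s t sk tk / s <= t.
  move=> H e; case: (leqP s t) => [st|ts]; first exact: H.
  by apply/esym/H => //; apply: ltnW.
move=> /eqP; rewrite eq_sym eqn_mod_dvd ?leq_mul2l ?st ?orbT // -mulnBr.
rewrite Gauss_dvdr; last by rewrite coprime_sym.
case: (posnP (t - s)) => [|h]; first by move/eqP; rewrite subn_eq0 => ts _; apply/eqP; rewrite eqn_leq st.
rewrite gtnNdvd // ltn_subLR //; exact: (leq_trans tk (leq_addl _ _)).
Qed.

End NatL.


Lemma prod_split (R : comPzRingType) (f : nat -> R) (d k : nat) :
  \prod_(i < d * k) f i = \prod_(s < d) \prod_(r < k) f (s + d * r)%N.
Proof.
elim: k => [|k IH].
  by rewrite muln0 big_ord0 big1 // => s _; rewrite big_ord0.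
rewrite mulnS addnC big_split_ord /= IH.
under [RHS]eq_bigr do rewrite big_ord_recr /=.
rewrite big_split /=; congr (_ * _).
by apply: eq_bigr => s _; rewrite addnC.
Qed.

Lemma amgm (R : realType) d (a : 'I_d -> R) : (0 < d)%N -> (forall i, 0 <= a i) ->
  d%:R * \prod_i a i <= \sum_i a i ^+ d.
Proof.
move=> d0 a0.
have := leif_AGM (A := 'I_d) (E := fun i => a i ^+ d).
rewrite card_ord => /(_ (fun i _ => exprn_ge0 _ (a0 i))) [+ _].
rewrite prodrXl ler_pXn2r //; last 2 first.
- by rewrite nnegrE; apply: prodr_ge0 => i _.
- by rewrite nnegrE divr_ge0 // sumr_ge0 // => i _; rewrite exprn_ge0.
by rewrite ler_pdivlMr ?ltr0n // mulrC.
Qed.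

Lemma prod_split' (R : comPzRingType) (f : nat -> R) (d k N : nat) : N = (d * k)%N ->
  \prod_(i < N) f i = \prod_(s < d) \prod_(r < k) f (s + d * r)%N.
Proof. by move=> ->; exact: prod_split. Qed.

Section G.
Context (R : realType) (g : R -> R) (g_per : forall x, g (x + pi) = g x)
  (n : nat) (n_pos : (0 < n)%N).
Local Notation st := (pi / n%:R : R).

Lemma g_perq y q : g (y + q%:R * pi) = g y.
Proof.
elim: q => [|q IH]; first by rewrite mul0r addr0.
by rewrite -natr1 mulrDl mul1r addrA g_per.
Qed.

Lemma g_mod x a : g (x + a%:R * st) = g (x + (a %% n)%:R * st).
Proof.
rewrite {1}(divn_eq a n) natrD natrM mulrDl.
have -> : (a %/ n)%:R * n%:R * st = (a %/ n)%:R * pi.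
  by field; rewrite pnatr_eq0 -lt0n.
by rewrite addrCA addrC g_perq.
Qed.

Lemma claimA m' k d x : n = (k * d)%N -> coprime m' k -> (0 < k)%N ->
  \prod_(i < n) g (x + ((m' * d) * i)%:R * st) =
  (\prod_(j < k) g (x + (d * j)%:R * st)) ^+ d.
Proof.
move=> nE co kpos.
have key (s q : nat) : (((m' * d) * (s + k * q)) %% n = d * ((m' * s) %% k))%N.
  rewrite nE (_ : (m' * d * (s + k * q) = (m' * q) * (k * d) + (m' * s) * d)%N); last by ring.
  by rewrite modnMDl -muln_modl mulnC.
rewrite (@prod_split' _ (fun i => g (x + (m' * d * i)%:R * st)) _ _ _ nE).
under eq_bigr => s _ do under eq_bigr => q _ do rewrite g_mod key.
under eq_bigr => s _ do rewrite prodr_const card_ord.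
rewrite prodrXl; congr (_ ^+ _).
pose h (s : 'I_k) : 'I_k := Ordinal (ltn_pmod (m' * s) kpos).
have hinj : injective h.
  move=> s t /(congr1 val) /= e.
  by apply: val_inj; apply: (@mod_inj m' k s t co (ltn_ord s) (ltn_ord t) e).
by rewrite [RHS](reindex_inj hinj).
Qed.

Lemma claimB d k x : n = (d * k)%N ->
  \prod_(i < n) g (x + (1 * i)%:R * st) =
  \prod_(s < d) \prod_(r < k) g ((x + s%:R * st) + (d * r)%:R * st).
Proof.
move=> nE; rewrite (@prod_split' _ (fun i => g (x + (1 * i)%:R * st)) _ _ _ nE).
apply: eq_bigr => s _; apply: eq_bigr => r _.
by rewrite mul1n natrD mulrDl addrA.
Qed.
End G.


Theorem theorem4p2 (R : realType) (g : R -> R)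
  (g_meas : measurable_fun setT g)
  (g_01 : forall x, 0 <= g x <= 1)
  (g_even : forall x, g (- x) = g x)
  (g_per : forall x, g (x + pi) = g x)
  (m n : nat) (m_pos : (0 < m)%N) (n_pos : (0 < n)%N) :
  (Gtilde g 1 n <= Gtilde g m n)%E.
Proof.
pose d := gcdn m n. pose k := (n %/ d)%N. pose m' := (m %/ d)%N.
have d0 : (0 < d)%N by rewrite gcdn_gt0 m_pos.
have nE : n = (k * d)%N by rewrite divnK // dvdn_gcdr.
have nE' : n = (d * k)%N by rewrite mulnC.
have mE : m = (m' * d)%N by rewrite divnK // dvdn_gcdl.
have co : coprime m' k by exact: (coprime_div_gcd d0).
have kpos : (0 < k)%N by move: n_pos; rewrite nE muln_gt0 => /andP[].
have dn : (d <= n)%N by rewrite dvdn_leq // dvdn_gcdr.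
clearbody d k m'.
pose F := fun x => \prod_(j < k) g (x + (d * j)%:R * (pi / n%:R)).
have mg (c : R) : measurable_fun setT (fun x : R => g (x + c)).
  exact: measurableT_comp g_meas (measurable_realfun.measurable_funD (@measurable_id _ _ _) (measurable_cst c)).
have mF (c : R) : measurable_fun setT (fun x : R => F (x + c)).
  apply: measurable_prod => j _; rewrite /=.
  under eq_fun do rewrite -addrA.
  exact: mg.
have F0 x : 0 <= F x by apply: prodr_ge0 => j _; case/andP: (g_01 (x + (d * j)%:R * (pi / n%:R))).
rewrite /Gtilde /=.
apply: lee_wpmul2l; first by rewrite lee_fin invr_ge0 pi_ge0.
rewrite [X in (_ <= X)%E](eq_integral (fun x : measurableTypeR R => (F x ^+ d)%:E)); last first.
  by move=> x _; congr (_%:E); rewrite mE; exact: (claimA _ _ g_per _ n_pos _ _ _ _ nE co kpos).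
rewrite [X in (X <= _)%E](eq_integral (fun x : measurableTypeR R => (\prod_(s < d) F (x + s%:R * (pi / n%:R)))%:E)); last first.
  by move=> x _; congr (_%:E); exact: (claimB _ g _ d k _ nE').
set a := (- (pi / 2))%R.
have Ea : (pi / 2 = a + pi :> R)%R by rewrite /a; lra.
rewrite Ea.
have mFX (c : R) : measurable_fun setT (fun x : R => (F (x + c) ^+ d)%:E).
  by apply/measurable_EFinP; apply: measurable_funX; exact: mF.
have mP : measurable_fun setT (fun x : R => \prod_(s < d) F (x + s%:R * (pi / n%:R))).
  by apply: measurable_prod => s _; exact: mF.
rewrite [X in (X <= _)%E]integral_itv_bndoo; last first.
  by apply/measurable_EFinP; apply: measurable_funS mP.
rewrite [X in (_ <= X)%E]integral_itv_bndoo; last first.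
  have := mFX 0%R; under eq_fun do rewrite addr0.
  by move=> H; apply: measurable_funS H.
have mO : measurable (`]a, (a + pi)%R[%classic : set R) by exact: measurable_itv.
rewrite -(@lee_pmul2l _ (d%:R%:E)) //; last by rewrite lte_fin ltr0n.
have H1 : ((d%:R)%:E * \int[lebesgue_measure]_(z in `]a, (a + pi)%R[)
      (\prod_(s < d) F (z + s%:R * (pi / n%:R)))%:E <= \int[lebesgue_measure]_(z in `]a, (a + pi)%R[)
   (\sum_(s < d) F (z + s%:R * (pi / n%:R)) ^+ d)%:E)%E.
  have mPE : measurable_fun setT (fun x : R => (\prod_(s < d) F (x + s%:R * (pi / n%:R)))%:E).
    by apply/measurable_EFinP.
  have mPE' : measurable_fun (setT : set (measurableTypeR R)) (fun x : measurableTypeR R => (\prod_(s < d) F (x + s%:R * (pi / n%:R)))%:E).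
    exact: mPE.
  rewrite -ge0_integralZl //; first last.
  - by move=> x _; rewrite lee_fin; apply: prodr_ge0 => s _.
  - exact: (measurable_funS _ _ mPE').
  have mSE : measurable_fun (setT : set (measurableTypeR R)) (fun x : measurableTypeR R =>
     (\sum_(s < d) F (x + s%:R * (pi / n%:R)) ^+ d)%:E).
    apply/measurable_EFinP; apply: measurable_sum => s.
    by apply: measurable_funX; exact: mF.
  apply: ge0_le_integral => //.
  - by move=> x _; rewrite -EFinM lee_fin mulr_ge0 // prodr_ge0.
  - apply: emeasurable_funM => //; exact: (measurable_funS _ _ mPE').
  - exact: (measurable_funS _ _ mSE).
  - by move=> x _; rewrite -EFinM lee_fin; apply: amgm => // s; exact: F0.
apply: (le_trans H1).
under eq_integral do rewrite -sumEFin.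
rewrite ge0_integral_sum //; last 2 first.
- move=> s; apply/measurable_EFinP; apply: measurable_funS (measurable_funX d (mF _)) => //.
- by move=> s x _; rewrite lee_fin exprn_ge0.
have mFd : measurable_fun setT (fun x : R => (F x ^+ d)%:E).
  by have := mFX 0%R; under eq_fun do rewrite addr0.
have Fp x : (F (x + pi) ^+ d)%:E = (F x ^+ d)%:E.
  by rewrite /F; congr ((_ ^+ _)%:E); apply: eq_bigr => j _; rewrite addrAC g_per.
rewrite (eq_bigr (fun _ => (\int[lebesgue_measure]_(x in `]a, (a + pi)%R[) (F x ^+ d)%:E)%E)); last first.
  move=> s _.
  have c0 : (0 <= s%:R * (pi / n%:R) :> R)%R.
    by rewrite mulr_ge0 // divr_ge0 // pi_ge0.
  have cp : (s%:R * (pi / n%:R) < pi :> R)%R.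
    rewrite mulrCA gtr_pMr ?pi_gt0 // ltr_pdivrMr ?ltr0n // mul1r ltr_nat.
    exact: (leq_trans (ltn_ord s) dn).
  have h0 x : (0 <= (F x ^+ d)%:E)%E by rewrite lee_fin exprn_ge0.
  exact: (integral_periodic _ _ _ mFd h0 Fp a _ c0 cp).
rewrite sumr_const card_ord [X in (_ <= X)%E]mule_natl.
exact: le_refl.
Qed.
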